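(* Let $p$ be an odd prime and let $r$ be an integer with $0 \leq r \leq \frac{p-1}{2}$. Then \[ \sum_{j=r}^{\frac{p-1}{2}} \binom{2j}{j}\binom{j}{r} 2^{p-1-2j} \equiv \begin{cases} 0 \pmod{p}, & \text{if } r < \frac{p-1}{2},\\ (-1)^{\frac{p-1}{2}} \pmod{p}, & \text{if } r = \frac{p-1}{2}. \end{cases} \] *)

(* Defs.v *)
From mathcomp Require Import all_boot all_algebra.

(* Main.v *)
Require Import Defs.
From mathcomp Require Import all_boot all_algebra all_field.
From mathcomp Require Import ring zify.
Import GRing.Theory Num.Theory.
Local Open Scope ring_scope.

Lemma binM (n j r : nat) : (r <= j)%N -> (j <= n)%N ->
  ('C(n, j) * 'C(j, r) = 'C(n, r) * 'C(n - r, j - r))%N.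
Proof.
move=> hrj hjn.
have hpos : (0 < r`! * (j - r)`! * (n - j)`!)%N by rewrite !muln_gt0 !fact_gt0.
apply/eqP; rewrite -(eqn_pmul2r hpos); apply/eqP.
transitivity (n`!).
  rewrite -(bin_fact hjn) -(bin_fact hrj).
  ring.
have e : (n - j = n - r - (j - r))%N by lia.
have hjr : (j - r <= n - r)%N by lia.
rewrite e -(bin_fact (leq_trans hrj hjn)) -(bin_fact hjr).
ring.
Qed.

Lemma key (F : comPzRingType) (x y Z Y c c' w : F) :
  (x + 1) * Z = 2 * (x + 1) * Y ->
  (2 * x + 1) * (c * w) = (x + 1) * Y ->
  (x + 1) * c' = (y - x) * c ->
  2 * y + 1 = 0 ->
  (x + 1) * ((x + 1) * Z) = (x + 1) * ((x + 1) * (c' * (w * (-4)))).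
Proof.
move=> /eqP; rewrite -subr_eq0 => /eqP E1.
move=> /eqP; rewrite -subr_eq0 => /eqP E2.
move=> /eqP; rewrite -subr_eq0 => /eqP E3 E0.
apply/eqP; rewrite -subr_eq0; apply/eqP.
have -> : (x + 1) * ((x + 1) * Z) - (x + 1) * ((x + 1) * (c' * (w * (-4)))) =
  (x + 1) * ((x + 1) * Z - 2 * (x + 1) * Y)
  - 2 * (x + 1) * ((2 * x + 1) * (c * w) - (x + 1) * Y)
  + 4 * w * (x + 1) * ((x + 1) * c' - (y - x) * c)
  + 2 * (x + 1) * c * w * (2 * y + 1) by ring.
rewrite E1 E2 E3 E0; ring.
Qed.

Lemma lemA (F : fieldType) (n : nat) :
  (n.*2.+1)%:R = 0 :> F ->
  (forall k, (0 < k <= n)%N -> k%:R != 0 :> F) ->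
  forall j, (j <= n)%N -> ('C(j.*2, j))%:R = ('C(n, j))%:R * (-4) ^+ j :> F.
Proof.
move=> H0 Hk; elim=> [|j IH] hj; first by rewrite !bin0 expr0 mulr1.
have a0 : (j.+1)%:R != 0 :> F by apply: Hk; rewrite hj.
have h1 := mul_bin_diag (j.+1.*2) j.
have h2 := mul_bin_down (j.*2.+1) j.
have h3 := mul_bin_left n j.
have e : (j.*2.+1 - j = j.+1)%N by lia.
rewrite e in h2.
rewrite doubleS /= in h1.
move: h1 h2 h3 => /(congr1 (fun m => m%:R : F)) h1
  /(congr1 (fun m => m%:R : F)) h2 /(congr1 (fun m => m%:R : F)) h3.
rewrite !natrM in h1 h2 h3.
rewrite natrB in h3; last by apply: ltnW.
rewrite IH in h2; last by apply: ltnW.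
apply: (mulfI a0); apply: (mulfI a0).
rewrite exprSr.
have -> : (j.+1)%:R = j%:R + 1 :> F by rewrite -natr1.
apply: (key _ _ (n%:R) _ ('C(j.*2.+1, j)%:R) ('C(n,j)%:R)).
- by rewrite natr1 -h1 -doubleS -(muln2 j.+1) natrM [_ * 2%:R]mulrC.
- by rewrite natr1 -h2 -(natr1 (j.*2)) -(muln2 j) natrM [j%:R * _]mulrC.
- by rewrite natr1 h3.
- by rewrite -H0 -(natr1 (n.*2)) -(muln2 n) natrM [n%:R * _]mulrC.
Qed.

Lemma lemB (F : comPzRingType) (n r : nat) : (r <= n)%N ->
  \sum_(r <= j < n.+1) ('C(n, j) * 'C(j, r))%:R * (-1) ^+ j
  = (if (r < n)%N then 0 else (-1) ^+ n) :> F.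
Proof.
move=> hrn.
rewrite -{1}(add0n r) big_addn.
have em : (n.+1 - r = (n - r).+1)%N by lia.
rewrite em.
rewrite (eq_big_nat _ _ (F2 := fun i => ('C(n,r))%:R * (-1)^+r * (('C(n - r, i))%:R * (-1)^+i))); last first.
  move=> i /andP[_ hi]; rewrite binM ?leq_addl //; last lia.
  by rewrite addnK natrM exprD; ring.
rewrite -big_distrr /= big_mkord.
have := exprBn (1:F) 1 (n - r).
rewrite subrr => E.
under eq_bigr do rewrite mulrC mulr_natr.
have E2 : 0^+(n-r) = \sum_(i < (n-r).+1) (-1)^+i *+ 'C(n-r,i) :> F.
  by rewrite E; apply: eq_bigr => i _; rewrite !expr1n !mulr1.
rewrite -E2 expr0n.
case: (ltnP r n) => h.
  by rewrite (_ : (n - r == 0)%N = false) ?mulr0 //; lia.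
have -> : r = n by lia.
by rewrite subnn binn /= mul1r mulr1.
Qed.

Theorem theorem4p2 (p r : nat) (hp : prime p) (hodd : odd p)
    (hr : (r <= (p - 1)./2)%N) :
  ((\sum_(r <= j < ((p - 1)./2).+1)
      ('C(2 * j, j) * 'C(j, r) * 2 ^ (p - 1 - 2 * j))%N%:Z)
   = (if (r < (p - 1)./2)%N then 0 else (-1) ^+ ((p - 1)./2)) %[mod p])%Z.
Proof.
have [n Ep] : exists n, p = n.*2.+1.
  by exists p./2; rewrite -{1}(odd_double_half p) hodd add1n.
have En : ((p - 1)./2 = n)%N by rewrite Ep subn1 /= doubleK.
rewrite En; rewrite En in hr.
have hn : (0 < n)%N.
  by case: n Ep En {hr} => // Ep; rewrite Ep in hp.
apply/eqP; rewrite eqz_mod_dvd (dvdz_pcharf (pchar_Fp hp)) rmorphB /= subr_eq0; apply/eqP.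
rewrite mulrz_sumr.
have H0 : (n.*2.+1)%:R = 0 :> 'F_p by rewrite -Ep pchar_Fp_0.
have Hk : forall k, (0 < k <= n)%N -> k%:R != 0 :> 'F_p.
  move=> k /andP[k0 kn]; rewrite -(dvdn_pcharf (pchar_Fp hp)).
  by apply/negP => /(dvdn_leq k0); lia.
rewrite (eq_big_nat _ _ (F2 := fun j => ((2:'F_p)^+2)^+n * (('C(n,j) * 'C(j,r))%:R * (-1)^+j))); last first.
  move=> j /andP[_ hj]; rewrite ltnS in hj.
rewrite -[LHS]pmulrn !natrM natrX mul2n (lemA _ _ H0 Hk _ hj).
  have ee : (p - 1 - j.*2 = 2 * (n - j))%N by rewrite Ep; lia.
  rewrite ee exprM.
  have e4 : (-4 : 'F_p) = -1 * 2^+2 by rewrite expr2; ring.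
  have -> : ((2:'F_p)^+2)^+n = (2^+2)^+j * (2^+2)^+(n-j) by rewrite -exprD subnKC.
  rewrite e4 exprMn; ring.
rewrite -big_distrr /= lemB //.
have h2 : ((2:'F_p)^+2)^+n = 1.
  have n2 : (2 : 'F_p) != 0.
    rewrite -(dvdn_pcharf (pchar_Fp hp)).
    by apply/negP => /(dvdn_leq (isT : (0 < 2)%N)); lia.
  rewrite -exprM mul2n; apply: (mulfI n2); rewrite mulr1 -exprS -Ep.
  by have := expf_card (2 : 'F_p); rewrite card_Fp.
rewrite h2 mul1r.
case: ifP => _; first by rewrite mulr0z.
by rewrite rmorphXn rmorphN1.
Qed.
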